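(* Let $n\ge2$, $\mathbf{a}\in\mathbb{C}^n$, $\beta>0$ and $f(\mathbf{z})=\frac12|\mathbf{a}^*\mathbf{z}|^2+\frac{\beta}{2}\|\mathbf{z}\|_4^4$ on $\mathbb{CS}^{n-1}$. Suppose that $\|\mathbf{a}\|_\infty>\frac12\|\mathbf{a}\|_1$ and that it is not the case that $\mathbf{a}$ has exactly one nonzero component with $\|\mathbf{a}\|_2^2\ge2\beta/(n-1)$. Then every consistent local minimizer of $f$ on $\mathbb{CS}^{n-1}$ is a global minimizer.
   Context: $\mathbb{CS}^{n-1}=\{\mathbf{z}\in\mathbb{C}^n:\|\mathbf{z}\|_2=1\}$. A stationary point $\mathbf{z}$ (i.e. $(\mathbf{a}^*\mathbf{z})\mathbf{a}+2\beta\,\mathrm{diag}(|z_1|^2,\dots,|z_n|^2)\mathbf{z}=2\lambda\mathbf{z}$ with $2\lambda=|\mathbf{a}^*\mathbf{z}|^2+2\beta\|\mathbf{z}\|_4^4$) is called consistent if $\bar a_kz_k\in\mathbb{R}$ for all $k$ with $a_k\neq0$ and $z_k\in\mathbb{R}$ for all $k$ with $a_k=0$. *)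

(* Defs.v *)
From HB Require Import structures.
From mathcomp Require Import all_boot all_order all_algebra.
From mathcomp Require Import all_classical all_reals.
From mathcomp Require Import complex.
Set Implicit Arguments. Unset Strict Implicit. Unset Printing Implicit Defensive.
Import Order.TTheory GRing.Theory Num.Theory.
Local Open Scope ring_scope.

Section Defs.
Variables (R : realType) (n : nat).
Local Notation C := R[i].

Definition cabs (x : C) : R := Normc.normc x.

Definition cdot (a z : 'I_n -> C) : C := \sum_(k < n) (a k)^* * z k.

Definition norm1 (a : 'I_n -> C) : R := \sum_(k < n) cabs (a k).
Definition norm2 (a : 'I_n -> C) : R := Num.sqrt (\sum_(k < n) cabs (a k) ^+ 2).
Definition norminf (a : 'I_n -> C) : R := \big[Num.max/0]_(k < n) cabs (a k).
Definition norm4_4 (z : 'I_n -> C) : R := \sum_(k < n) cabs (z k) ^+ 4.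

Definition csphere (z : 'I_n -> C) : Prop := norm2 z = 1.

Definition fobj (a : 'I_n -> C) (beta : R) (z : 'I_n -> C) : R :=
  2^-1 * cabs (cdot a z) ^+ 2 + beta / 2 * norm4_4 z.

Definition stationary (a : 'I_n -> C) (beta : R) (z : 'I_n -> C) : Prop :=
  let two_lambda : R := cabs (cdot a z) ^+ 2 + 2 * beta * norm4_4 z in
  forall k, cdot a z * a k + ((2 * beta * cabs (z k) ^+ 2)%:C)%C * z k
            = (two_lambda%:C)%C * z k.

Definition consistent (a : 'I_n -> C) (beta : R) (z : 'I_n -> C) : Prop :=
  stationary a beta z /\
  (forall k, a k != 0 -> Im ((a k)^* * z k) = 0) /\
  (forall k, a k = 0 -> Im (z k) = 0).

Definition local_minimizer_on_sphere (F : ('I_n -> C) -> R) (z : 'I_n -> C) : Prop :=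
  csphere z /\
  exists2 eps : R, 0 < eps &
    forall w, csphere w -> norm2 (fun k => w k - z k) < eps -> F z <= F w.

Definition global_minimizer_on_sphere (F : ('I_n -> C) -> R) (z : 'I_n -> C) : Prop :=
  csphere z /\ forall w, csphere w -> F z <= F w.

End Defs.

(* Main.v *)
Require Import Defs.
From HB Require Import structures.
From mathcomp Require Import all_boot all_order all_algebra.
From mathcomp Require Import all_classical all_reals.
From mathcomp Require Import complex.
From mathcomp Require Import ring lra.
Import Order.TTheory GRing.Theory Num.Theory.
Local Open Scope ring_scope.
Set Implicit Arguments. Unset Strict Implicit.

Local Notation cRe := (@complex.Re _).
Local Notation cIm := (@complex.Im _).
Section Comp.
Variable R : realType.
Implicit Types (a w : R[i]) (x y : R).

Definition ur a : R := if a == 0 then 1 else cRe a / cabs a.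
Definition ui a : R := if a == 0 then 0 else cIm a / cabs a.
Definition phi a x y : R[i] := ((ur a * x - ui a * y) +i* (ur a * y + ui a * x))%C.
Definition cX a w := ur a * cRe w + ui a * cIm w.
Definition cY a w := ur a * cIm w - ui a * cRe w.

Lemma cabs_ge0 w : 0 <= cabs w.
Proof. by case: w => p q; rewrite /cabs /= sqrtr_ge0. Qed.

Lemma cabs2 w : cabs w ^+ 2 = cRe w ^+ 2 + cIm w ^+ 2.
Proof. by case: w => p q; rewrite /cabs /= sqr_sqrtr // addr_ge0 ?sqr_ge0. Qed.

Lemma cabs_neq0 a : a != 0 -> cabs a != 0.
Proof. by move=> h; apply/eqP => /Normc.eq0_normc /eqP; rewrite (negbTE h). Qed.

Lemma u_unit a : ur a ^+ 2 + ui a ^+ 2 = 1.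
Proof.
rewrite /ur /ui; case: eqP => [_|/eqP h]; first by rewrite expr1n expr0n addr0.
have h2 := cabs_neq0 h; have e := cabs2 a.
rewrite !expr_div_n -mulrDl -e divff // expf_neq0 //.
Qed.

Lemma conj_u1 a : cRe a * ur a + cIm a * ui a = cabs a.
Proof.
rewrite /ur /ui; case: eqP => [->|/eqP h]; first by rewrite /cabs Normc.normc0 /= !mul0r addr0.
have h2 := cabs_neq0 h; have e := cabs2 a.
rewrite !mulrA -mulrDl -!expr2 -e expr2 -mulrA divff ?mulr1 //.
Qed.

Lemma conj_u2 a : cRe a * ui a - cIm a * ur a = 0.
Proof.
rewrite /ur /ui; case: eqP => [->|/eqP h]; first by rewrite /= !mul0r subrr.
rewrite !mulrA [cIm a * cRe a]mulrC subrr //.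
Qed.

Lemma cabs_phi a x y : cabs (phi a x y) ^+ 2 = x ^+ 2 + y ^+ 2.
Proof.
rewrite cabs2 /phi /=.
have e := u_unit a.
transitivity ((ur a ^+ 2 + ui a ^+ 2) * (x ^+ 2 + y ^+ 2)); first by ring.
by rewrite e mul1r.
Qed.

Lemma conj_phi a x y : ((a^* * phi a x y) = (cabs a * x) +i* (cabs a * y))%C.
Proof.
have e1 := conj_u1 a; have e2 := conj_u2 a.
move: e1 e2; rewrite /phi; case: a => p q /= e1 e2.
simpc. set u1 := ur _; set u2 := ui _; set s := Num.sqrt _.
congr (_ +i* _)%C.
- transitivity (x * (p * u1 + q * u2) - y * (p * u2 - q * u1)); first by ring.
  by rewrite e1 e2 mulr0 subr0 mulrC.
- transitivity (y * (p * u1 + q * u2) + x * (p * u2 - q * u1)); first by ring.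
  by rewrite e1 e2 mulr0 addr0 mulrC.
Qed.

Lemma phi_XY a w : phi a (cX a w) (cY a w) = w.
Proof.
have e := u_unit a.
rewrite /phi /cX /cY; case: w => p q /=; congr (_ +i* _)%C.
- transitivity ((ur a ^+ 2 + ui a ^+ 2) * p); first by ring.
  by rewrite e mul1r.
- transitivity ((ur a ^+ 2 + ui a ^+ 2) * q); first by ring.
  by rewrite e mul1r.
Qed.

Lemma cY_cons a w : (a != 0 -> cIm (a^* * w)%C = 0) -> (a = 0 -> cIm w = 0) -> cY a w = 0.
Proof.
move=> h1 h2; rewrite /cY /ur /ui; case: eqP => [/h2 ->|/eqP h]; first by rewrite mulr0 mul0r subr0.
have H := h1 h; clear h1 h2; move: H.
case: a h => p q h; case: w => r s /= H.
transitivity ((p * s - q * r) / cabs (p +i* q)%C); first by ring.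
have -> : p * s - q * r = p * s + - q * r by ring.
by rewrite H mul0r.
Qed.

Lemma phi_sub a x y x' y' : phi a x y - phi a x' y' = phi a (x - x') (y - y').
Proof. rewrite /phi; simpc; congr (_ +i* _)%C; ring. Qed.

Lemma sum_cplx n (F G : 'I_n -> R) :
  (\sum_(k < n) (F k +i* G k) = (\sum_(k < n) F k) +i* (\sum_(k < n) G k))%C.
Proof.
elim/big_rec3: _ => [//|i u v w _ ->]. by simpc.
Qed.

End Comp.

Section Real.
Variables (R : realType) (n : nat) (al xi : 'I_n -> R) (beta : R).

Lemma sum2 (c1 c2 : R) (F G : 'I_n -> R) :
  \sum_(k < n) (c1 * F k + c2 * G k) = c1 * \sum_(k < n) F k + c2 * \sum_(k < n) G k.
Proof. by rewrite big_split /= -!mulr_sumr. Qed.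

Lemma sum3 (c1 c2 c3 : R) (F G H : 'I_n -> R) :
  \sum_(k < n) (c1 * F k + c2 * G k + c3 * H k) =
  c1 * \sum_(k < n) F k + c2 * \sum_(k < n) G k + c3 * \sum_(k < n) H k.
Proof. by rewrite !big_split /= -!mulr_sumr. Qed.

Definition gR (x y : 'I_n -> R) : R :=
  2^-1 * ((\sum_(k < n) al k * x k) ^+ 2 + (\sum_(k < n) al k * y k) ^+ 2)
  + beta / 2 * \sum_(k < n) (x k ^+ 2 + y k ^+ 2) ^+ 2.

Definition cR : R := 2^-1 * (\sum_(k < n) al k * xi k) ^+ 2 + beta * \sum_(k < n) xi k ^+ 4.

Definition qR (y : 'I_n -> R) : R :=
  2^-1 * (\sum_(k < n) al k * y k) ^+ 2 + beta * \sum_(k < n) (xi k ^+ 2 * y k ^+ 2)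
  - cR * \sum_(k < n) y k ^+ 2.

Lemma gR0 : gR xi (fun _ => 0) =
  2^-1 * (\sum_(k < n) al k * xi k) ^+ 2 + beta / 2 * \sum_(k < n) xi k ^+ 4.
Proof.
have z0 : \sum_(k < n) al k * (fun _ : 'I_n => (0:R)) k = 0.
  by rewrite big1 // => k _; rewrite mulr0.
rewrite /gR z0.
congr (_ + _ * _); first by rewrite expr0n /= addr0.
by apply: eq_bigr => k _; rewrite expr0n /= addr0 -exprM.
Qed.

Lemma stepA (x y : 'I_n -> R) : 0 <= beta ->
  \sum_(k < n) (x k ^+ 2 + y k ^+ 2) = 1 ->
  gR xi (fun _ => 0) + qR x + qR y <= gR x y.
Proof.
move=> hb hs.
have E2 : \sum_(k < n) (x k ^+ 2 + y k ^+ 2 - xi k ^+ 2) ^+ 2 =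
   \sum_(k < n) (x k ^+ 2 + y k ^+ 2) ^+ 2
   - 2 * (\sum_(k < n) (xi k ^+ 2 * x k ^+ 2) + \sum_(k < n) (xi k ^+ 2 * y k ^+ 2))
   + \sum_(k < n) xi k ^+ 4.
  rewrite -big_split /=.
  rewrite (eq_bigr (fun k => 1 * (x k ^+ 2 + y k ^+ 2) ^+ 2 + (-2) * (xi k ^+ 2 * x k ^+ 2 + xi k ^+ 2 * y k ^+ 2) + 1 * xi k ^+ 4)); last by move=> k _; ring.
  rewrite sum3; ring.
have E1 : \sum_(k < n) x k ^+ 2 + \sum_(k < n) y k ^+ 2 = 1 by rewrite -big_split.
have P : 0 <= \sum_(k < n) (x k ^+ 2 + y k ^+ 2 - xi k ^+ 2) ^+ 2.
  by apply: sumr_ge0 => k _; rewrite sqr_ge0.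
rewrite gR0 /gR /qR /cR.
move: E1 E2 P; set P4 := \sum_(k < n) (x k ^+ 2 + y k ^+ 2) ^+ 2.
set SQ := \sum_(k < n) (x k ^+ 2 + y k ^+ 2 - xi k ^+ 2) ^+ 2; set X2 := \sum_(k < n) x k ^+ 2.
move=> E1 E2 P.
have -> : \sum_(k < n) y k ^+ 2 = 1 - X2 by lra.
rewrite -subr_ge0.
have hb2 : 0 <= beta / 2 by apply: divr_ge0.
have hh := mulr_ge0 hb2 P.
rewrite E2 in hh.
lra.
Qed.

Lemma stepB (eps : R) : 0 < eps -> \sum_(k < n) xi k ^+ 2 = 1 ->
  (forall x y : 'I_n -> R, \sum_(k < n) (x k ^+ 2 + y k ^+ 2) = 1 ->
     \sum_(k < n) ((x k - xi k) ^+ 2 + y k ^+ 2) < eps ^+ 2 ->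
     gR xi (fun _ => 0) <= gR x y) ->
  forall y0 : 'I_n -> R, 0 <= qR y0.
Proof.
move=> he hxi hloc y0.
rewrite leNgt; apply/negP => hq.
set A := \sum_(k < n) al k * xi k.
set B := \sum_(k < n) al k * y0 k.
set D := \sum_(k < n) y0 k ^+ 2.
set S4 := \sum_(k < n) xi k ^+ 4.
set S22 := \sum_(k < n) (xi k ^+ 2 * y0 k ^+ 2).
set Y4 := \sum_(k < n) y0 k ^+ 4.
have hD : 0 <= D by apply: sumr_ge0 => k _; rewrite sqr_ge0.
set q0 := qR y0.
have q0E : q0 = 2^-1 * B ^+ 2 + beta * S22 - (2^-1 * A ^+ 2 + beta * S4) * D by [].
set g0 := 2^-1 * A ^+ 2 + beta / 2 * S4.
set K := 2^-1 * B ^+ 2 * D + beta / 2 * Y4 - g0 * D ^+ 2.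
set mm := Num.min (eps ^+ 2 / (2 * D + 1)) (- q0 / (`|K| + 1)).
set t := mm / 2.
have hD1 : 0 < 2 * D + 1 by lra.
have hK1 : 0 < `|K| + 1 by have := normr_ge0 K; lra.
have e2 : 0 < eps ^+ 2 by rewrite exprn_gt0.
have m1 : 0 < eps ^+ 2 / (2 * D + 1) by rewrite divr_gt0.
have m2 : 0 < - q0 / (`|K| + 1) by rewrite divr_gt0 // oppr_gt0.
have hm : 0 < mm by rewrite /mm lt_min m1 m2.
have ht : 0 < t by rewrite /t divr_gt0.
have htm : t < mm by rewrite /t; lra.
have ht1 : t * (2 * D + 1) < eps ^+ 2.
  rewrite -ltr_pdivlMr //.
  by move: htm; rewrite /mm lt_min => /andP[].
have ht2 : t * (`|K| + 1) < - q0.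
  rewrite -ltr_pdivlMr //.
  by move: htm; rewrite /mm lt_min => /andP[].
set s := Num.sqrt t.
have st : s ^+ 2 = t by rewrite sqr_sqrtr // ltW.
set M := 1 + t * D.
have hM : 1 <= M by rewrite /M; have := mulr_ge0 (ltW ht) hD; lra.
set r := (Num.sqrt M)^-1.
set rho := r ^+ 2.
have hrho : rho * M = 1.
  rewrite /rho /r exprVn sqr_sqrtr; last by lra.
  by rewrite mulVf //; apply/eqP => h; rewrite h in hM; lra.
have hr0 : 0 < r by rewrite /r invr_gt0 sqrtr_gt0; lra.
have hr1 : r <= 1.
  rewrite /r invf_le1 ?sqrtr_gt0; last by lra.
  by rewrite -sqrtr1 ler_sqrt; lra.
pose x := fun k => r * xi k.
pose y := fun k => s * r * y0 k.
have Hs : \sum_(k < n) (x k ^+ 2 + y k ^+ 2) = 1.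
  rewrite (eq_bigr (fun k => rho * xi k ^+ 2 + (rho * t) * y0 k ^+ 2)); last first.
    by move=> k _; rewrite /x /y -st /rho; ring.
  rewrite sum2 hxi -/D; transitivity (rho * M); last exact: hrho. rewrite /M; ring.
have Hd : \sum_(k < n) ((x k - xi k) ^+ 2 + y k ^+ 2) < eps ^+ 2.
  rewrite (eq_bigr (fun k => (r - 1) ^+ 2 * xi k ^+ 2 + (rho * t) * y0 k ^+ 2)); last first.
    by move=> k _; rewrite /x /y -st /rho; ring.
  rewrite sum2 hxi -/D mulr1.
  have hrM : rho * (1 + t * D) = 1 by [].
  have : rho <= 1 by rewrite /rho expr_le1 // ltW.
  have htD : 0 <= t * D by apply: mulr_ge0 => //; apply: ltW.
  have : (r - 1) ^+ 2 <= 1 - rho by rewrite /rho; nra.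
  nra.
have Hg := hloc x y Hs Hd.
rewrite gR0 -/A -/S4 -/g0 /gR in Hg.
have eA : \sum_(k < n) al k * x k = r * A.
  by rewrite /A mulr_sumr; apply: eq_bigr => k _; rewrite /x; ring.
have eB : \sum_(k < n) al k * y k = s * r * B.
  by rewrite /B mulr_sumr; apply: eq_bigr => k _; rewrite /y; ring.
have e4 : \sum_(k < n) (x k ^+ 2 + y k ^+ 2) ^+ 2 = rho ^+ 2 * S4 + (2 * rho ^+ 2 * t) * S22 + (rho ^+ 2 * t ^+ 2) * Y4.
  rewrite -sum3; apply: eq_bigr => k _; rewrite /x /y -st /rho; ring.
rewrite eA eB e4 in Hg.
have Hg2 : g0 * M ^+ 2 <= 2^-1 * (A ^+ 2 + t * B ^+ 2) * M + beta / 2 * (S4 + 2 * t * S22 + t ^+ 2 * Y4).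
  have HM2 : 0 < M ^+ 2 by rewrite exprn_gt0 //; lra.
  rewrite -(ler_pM2r HM2) in Hg.
  apply: (le_trans Hg); rewrite le_eqVlt; apply/orP; left; apply/eqP.
  transitivity (2^-1 * (A ^+ 2 + t * B ^+ 2) * (rho * M) * M + beta / 2 * (rho * M) ^+ 2 * (S4 + 2 * t * S22 + t ^+ 2 * Y4)).
    rewrite -st /rho; ring.
  by rewrite hrho; ring.
have iden : 2^-1 * (A ^+ 2 + t * B ^+ 2) * M + beta / 2 * (S4 + 2 * t * S22 + t ^+ 2 * Y4) - g0 * M ^+ 2 = t * q0 + t ^+ 2 * K.
  by rewrite q0E /K /g0 /M; field.
have hK : t * K <= t * `|K| by rewrite ler_pM2l // ler_norm.
have : t * q0 + t ^+ 2 * K < 0.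
  have -> : t * q0 + t ^+ 2 * K = t * (q0 + t * K) by ring.
  rewrite pmulr_rlt0 //; lra.
move=> Hneg; lra.
Qed.

End Real.

Section Conv.
Variable R : realType.
Lemma conjE (x : R[i]) : Num.conj x = (x ^*)%C.
Proof. by []. Qed.
Lemma ImC (x : R[i]) : Num.Theory.Im x = (complex.Im x)%:C%C.
Proof.
rewrite ImE conjE; case: x => p q /=.
have -> : ('i * ((p +i* q)^* - (p +i* q)) = (2%:R : R[i]) * (q%:C))%C.
  by simpc; rewrite /=; congr (_ +i* _)%C; ring.
by rewrite mulrC mulrA mulVf ?mul1r // pnatr_eq0.
Qed.
Lemma ImC0 (x : R[i]) : Num.Theory.Im x = 0 -> complex.Im x = 0.
Proof. by rewrite ImC => /(congr1 (@complex.Re R)). Qed.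
Lemma sqrt_eq1 (s : R) : 0 <= s -> Num.sqrt s = 1 -> s = 1.
Proof. by move=> h0 h; rewrite -(sqr_sqrtr h0) h expr1n. Qed.
End Conv.

Section Vec.
Variables (R : realType) (n : nat) (a : 'I_n -> R[i]) (beta : R).
Definition al k := cabs (a k).
Definition Phi (x y : 'I_n -> R) : 'I_n -> R[i] := fun k => phi (a k) (x k) (y k).

Lemma norm2_Phi x y : norm2 (Phi x y) = Num.sqrt (\sum_(k < n) (x k ^+ 2 + y k ^+ 2)).
Proof. by rewrite /norm2; congr Num.sqrt; apply: eq_bigr => k _; exact: cabs_phi. Qed.

Lemma cdot_Phi x y : cdot a (Phi x y) =
  ((\sum_(k < n) al k * x k) +i* (\sum_(k < n) al k * y k))%C.
Proof. by rewrite /cdot -sum_cplx; apply: eq_bigr => k _; rewrite conjE conj_phi. Qed.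

Lemma fobj_Phi x y : fobj a beta (Phi x y) = gR al beta x y.
Proof.
rewrite /fobj cdot_Phi cabs2 /gR /norm4_4 /=; congr (_ + _ * _).
by apply: eq_bigr => k _; rewrite (_ : 4 = 2 * 2)%N // exprM cabs_phi.
Qed.
End Vec.

Theorem theorem11 (R : realType) (n : nat) (a : 'I_n -> R[i]) (beta : R) :
  (2 <= n)%N -> 0 < beta ->
  norminf a > 2^-1 * norm1 a ->
  ~ (#|[pred k | a k != 0]| = 1%N /\ norm2 a ^+ 2 >= 2 * beta / (n - 1)%:R) ->
  forall z : 'I_n -> R[i],
    consistent a beta z -> local_minimizer_on_sphere (fobj a beta) z ->
    global_minimizer_on_sphere (fobj a beta) z.
Proof.
move=> _ hb _ _ z [_ [c1 c2]] [sz [eps he hloc]].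
pose xi k := cX (a k) (z k).
have zk : forall k, z k = phi (a k) (xi k) 0.
  move=> k; rewrite -{1}(phi_XY (a k) (z k)) (@cY_cons _ (a k) (z k)) //.
  - by move=> h; apply: ImC0; exact: c1.
  - by move=> h; apply: ImC0; exact: c2.
have zE : z = Phi a xi (fun _ => 0) by apply: funext => k; exact: zk.
have hxi : \sum_(k < n) xi k ^+ 2 = 1.
  move: sz; rewrite /csphere zE norm2_Phi => /sqrt_eq1 h.
  rewrite -h; last by apply: sumr_ge0 => k _; rewrite addr_ge0 ?sqr_ge0.
  by apply: eq_bigr => k _; rewrite expr0n addr0.
have loc : forall x y : 'I_n -> R, \sum_(k < n) (x k ^+ 2 + y k ^+ 2) = 1 ->
     \sum_(k < n) ((x k - xi k) ^+ 2 + y k ^+ 2) < eps ^+ 2 ->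
     gR (al a) beta xi (fun _ => 0) <= gR (al a) beta x y.
  move=> x y h1 h2; rewrite -!fobj_Phi -zE; apply: hloc.
    by rewrite /csphere norm2_Phi h1 sqrtr1.
  have -> : (fun k => Phi a x y k - z k) = Phi a (fun k => x k - xi k) y.
    by apply: funext => k; rewrite zk /Phi phi_sub subr0.
  rewrite norm2_Phi -(@ger0_norm _ eps) ?ltW // -sqrtr_sqr ltr_sqrt //.
  by rewrite exprn_gt0.
have hq := stepB he hxi loc.
split; first by [].
move=> w hw.
have wE : w = Phi a (fun k => cX (a k) (w k)) (fun k => cY (a k) (w k)).
  by apply: funext => k; rewrite /Phi phi_XY.
have hs : \sum_(k < n) (cX (a k) (w k) ^+ 2 + cY (a k) (w k) ^+ 2) = 1.
  move: hw; rewrite /csphere {1}wE norm2_Phi => h; apply: sqrt_eq1 h.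
  by apply: sumr_ge0 => k _; rewrite addr_ge0 ?sqr_ge0.
rewrite zE wE !fobj_Phi.
have := stepA (al a) xi (ltW hb) hs.
have := hq (fun k => cX (a k) (w k)); have := hq (fun k => cY (a k) (w k)).
lra.
Qed.
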